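(* Let $n,d\ge 1$ and let $$T=\begin{pmatrix} B_{11} & \cdots & B_{1n}\\ \vdots & \ddots & \vdots\\ B_{n1} & \cdots & B_{nn}\end{pmatrix}=\sum_{i,j=1}^n E_{ij}\otimes B_{ij}\in M(nd,\mathbb{C}),$$ where $E_{ij}$ are the standard matrix units of $M(n,\mathbb{C})$, and suppose that all blocks $B_{ij}\in M(d,\mathbb{C})$ ($i,j=1,\ldots,n$) are normal and pairwise commute. Let $\{u_k\}_{k=1}^d$ be a common orthonormal basis of eigenvectors of all the $B_{ij}$, with $B_{ij}u_k=\beta_k^{ij}u_k$ for $i,j=1,\ldots,n$, $k=1,\ldots,d$, and for each $k$ let $M(\beta_k^{ij})=(\beta_k^{ij})_{i,j=1}^n\in M(n,\mathbb{C})$, so that $T=\sum_{k=1}^d M(\beta_k^{ij})\otimes u_ku_k^{\dagger}$. Then: (1) $T$ is separable if and only if $T$ is positive semidefinite; (2) $T$ is positive semidefinite if and only if all $d$ matrices $M(\beta_k^{ij})$, $k=1,\ldots,d$, are positive semidefinite; (3) if $T$ is separable, then $$T=\sum_{k=1}^d\sum_{j=0}^{n-1}\lambda_j^k\, v_j^k v_j^{k\dagger}\otimes u_ku_k^{\dagger},$$ where $\{\lambda_j^k\}_{j=0}^{n-1}$ and $\{v_j^k\}_{j=0}^{n-1}$ are the eigenvalues and a corresponding orthonormal basis of eigenvectors of the (positive semidefinite, hence Hermitian) matrix $M(\beta_k^{ij})$; this is a separable decomposition.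
   Context: The tensor product of matrices is the Kronecker product, so $A\otimes B$ for $A\in M(n,\mathbb{C})$, $B\in M(d,\mathbb{C})$ is the $nd\times nd$ block matrix whose $(i,j)$ block is $a_{ij}B$. A matrix $T\in M(nd,\mathbb{C})\cong M(n,\mathbb{C})\otimes M(d,\mathbb{C})$ is called separable if it is positive semidefinite and can be written as a finite sum $T=\sum_i \rho_i\otimes\sigma_i$ with $\rho_i\in M(n,\mathbb{C})$ and $\sigma_i\in M(d,\mathbb{C})$ positive semidefinite (states need not be normalized). *)

(* Defs.v *)
(* Complex scalars: an arbitrary numClosedFieldType C
   (e.g. algC, or complex R for R : realType). *)
From HB Require Import structures.
From mathcomp Require Import all_boot all_order all_algebra.
From mathcomp Require Export sesquilinear spectral.
From mathcomp.real_closed Require Export mxtens.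
Set Implicit Arguments. Unset Strict Implicit. Unset Printing Implicit Defensive.
Import Order.TTheory GRing.Theory Num.Theory.
Local Open Scope ring_scope.

Definition ctr {C : numClosedFieldType} {m n : nat} (M : 'M[C]_(m, n)) : 'M[C]_(n, m) :=
  map_mx Num.conj (M^T).

Definition psd {C : numClosedFieldType} {n : nat} (A : 'M[C]_n) : Prop :=
  ctr A = A /\ forall v : 'cV[C]_n, 0 <= (ctr v *m A *m v) 0 0.

Definition separable {C : numClosedFieldType} {n d : nat} (T : 'M[C]_(n * d)) : Prop :=
  psd T /\
  exists (m : nat) (rho : 'I_m -> 'M[C]_n) (sigma : 'I_m -> 'M[C]_d),
    (forall i, psd (rho i) /\ psd (sigma i)) /\
    T = \sum_(i < m) (rho i *t sigma i).

Definition orthonormal_fam {C : numClosedFieldType} {n m : nat} (u : 'I_m -> 'cV[C]_n) : Prop :=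
  forall k l, ctr (u k) *m u l = ((k == l)%:R)%:M.

(* Main.v *)
Require Import Defs.
From HB Require Import structures.
From mathcomp Require Import all_boot all_order all_algebra.
From mathcomp Require Import sesquilinear spectral.
From mathcomp.real_closed Require Import mxtens.
Import Order.TTheory GRing.Theory Num.Theory.
Local Open Scope ring_scope.

Section H.
Set Implicit Arguments.
Context {C : numClosedFieldType}.

Lemma ctrE m n (A : 'M[C]_(m,n)) i j : ctr A i j = (A j i)^*.
Proof. by rewrite !mxE. Qed.

Lemma ctrM m n p (A : 'M[C]_(m,n)) (B : 'M[C]_(n,p)) : ctr (A *m B) = ctr B *m ctr A.
Proof. by rewrite /ctr trmx_mul map_mxM. Qed.

Lemma ctrK m n (A : 'M[C]_(m,n)) : ctr (ctr A) = A.
Proof. by apply/matrixP=> i j; rewrite !mxE conjCK. Qed.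

Lemma ctrD m n (A B : 'M[C]_(m,n)) : ctr (A + B) = ctr A + ctr B.
Proof. by apply/matrixP=> i j; rewrite !mxE rmorphD. Qed.

Lemma ctr_sum m n I r (P : pred I) (F : I -> 'M[C]_(m,n)) :
  ctr (\sum_(i <- r | P i) F i) = \sum_(i <- r | P i) ctr (F i).
Proof. by apply/matrixP=> i j; rewrite !mxE !summxE rmorph_sum; apply: eq_bigr => k _; rewrite !mxE. Qed.

Lemma ctrZ m n (a : C) (A : 'M[C]_(m,n)) : ctr (a *: A) = a^* *: ctr A.
Proof. by apply/matrixP=> i j; rewrite !mxE rmorphM. Qed.

Lemma ctr_tens m n p q (A : 'M[C]_(m,n)) (B : 'M[C]_(p,q)) : ctr (A *t B) = ctr A *t ctr B.
Proof. by apply/matrixP=> i j; rewrite !mxE rmorphM. Qed.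

Lemma tensmxDl m n p q (A A' : 'M[C]_(m,n)) (B : 'M[C]_(p,q)) : (A + A') *t B = A *t B + A' *t B.
Proof. by apply/matrixP=> i j; rewrite !mxE mulrDl. Qed.
Lemma tensmxDr m n p q (A : 'M[C]_(m,n)) (B B' : 'M[C]_(p,q)) : A *t (B + B') = A *t B + A *t B'.
Proof. by apply/matrixP=> i j; rewrite !mxE mulrDr. Qed.
Lemma tensmxZl m n p q a (A : 'M[C]_(m,n)) (B : 'M[C]_(p,q)) : (a *: A) *t B = a *: (A *t B).
Proof. by apply/matrixP=> i j; rewrite !mxE mulrA. Qed.
Lemma tensmxZr m n p q a (A : 'M[C]_(m,n)) (B : 'M[C]_(p,q)) : A *t (a *: B) = a *: (A *t B).
Proof. by apply/matrixP=> i j; rewrite !mxE mulrCA. Qed.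
Lemma tensmx_suml m n p q I r (P : pred I) (F : I -> 'M[C]_(m,n)) (B : 'M[C]_(p,q)) :
  (\sum_(i <- r | P i) F i) *t B = \sum_(i <- r | P i) (F i *t B).
Proof.
elim/big_rec2: _ => [|i x y _ <-]; first by rewrite tens0mx.
by rewrite tensmxDl.
Qed.
Lemma tensmx_sumr m n p q I r (P : pred I) (A : 'M[C]_(m,n)) (F : I -> 'M[C]_(p,q)) :
  A *t (\sum_(i <- r | P i) F i) = \sum_(i <- r | P i) (A *t F i).
Proof.
elim/big_rec2: _ => [|i x y _ <-]; first by rewrite tensmx0.
by rewrite tensmxDr.
Qed.

Lemma tens11E (a b : 'M[C]_1) i j : (a *t b) i j = a 0 0 * b 0 0.
Proof. by rewrite !mxE !ord1. Qed.

Lemma sum_outer m (u : 'I_m -> 'cV[C]_m) : orthonormal_fam u ->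
  \sum_k u k *m ctr (u k) = 1%:M.
Proof.
move=> uo.
pose U : 'M[C]_m := \matrix_(i, k) u k i 0.
have H1 : ctr U *m U = 1%:M.
  apply/matrixP=> k l; have := uo k l; move/matrixP/(_ 0 0).
  rewrite !mxE eqxx mulr1n => <-; apply: eq_bigr => i _; rewrite !mxE.
  by [].
have H2 := mulmx1C H1.
apply/matrixP=> i j; rewrite summxE -H2 mxE; apply: eq_bigr => k _.
by rewrite !mxE big_ord1 !mxE.
Qed.


Lemma conj_quad N (x y : 'cV[C]_N) (A : 'M[C]_N) :
  ((ctr x *m A *m y) 0 0)^* = (ctr y *m ctr A *m x) 0 0.
Proof. by rewrite -ctrE !ctrM ctrK mulmxA. Qed.

Lemma conj_11 m (x : 'cV[C]_m) (y : 'cV[C]_m) :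
  ((ctr x *m y) 0 0)^* = (ctr y *m x) 0 0.
Proof. by rewrite -ctrE ctrM ctrK. Qed.

Lemma psd_outer m (u : 'cV[C]_m) : psd (u *m ctr u).
Proof.
split; first by rewrite ctrM ctrK.
move=> w; rewrite !mulmxA -(mulmxA _ (ctr u) w) mxE big_ord1 -conj_11 mulrC.
idtac.
exact: mul_conjC_ge0.
Qed.

Lemma psd_scale m (c : C) (A : 'M[C]_m) : 0 <= c -> psd A -> psd (c *: A).
Proof.
move=> c0 [hA qA]; split; first by rewrite ctrZ geC0_conj // hA.
by move=> w; rewrite -scalemxAr -scalemxAl mxE mulr_ge0.
Qed.

Lemma quad_delta m (A : 'M[C]_m) i j :
  (ctr (delta_mx i 0 : 'cV[C]_m) *m A *m (delta_mx j 0 : 'cV[C]_m)) 0 0 = A i j.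
Proof.
have -> : ctr (delta_mx i 0 : 'cV[C]_m) = delta_mx 0 i.
  by apply/matrixP=> a b; rewrite !mxE conjC_nat andbC.
by rewrite -rowE -colE !mxE.
Qed.

Lemma col_tens1 m (y : 'cV[C]_(m * 1)) : exists z : 'cV[C]_m, y = z *t (1%:M : 'M[C]_1).
Proof.
exists (\col_i y (mxtens_index (i, ord0)) 0).
apply/matrixP=> a b; case: (mxtens_indexP a) => i j.
rewrite !mxE !mxtens_indexK /= !ord1 mulr1.
by congr (y _ _); apply: val_inj => /=; rewrite ?ord1.
Qed.

Lemma ctr1 m : ctr (1%:M : 'M[C]_m) = 1%:M.
Proof. by apply/matrixP=> a b; rewrite !mxE conjC_nat eq_sym. Qed.

Lemma quad_tens1 m (A : 'M[C]_m) (z : 'cV[C]_m) :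
  (ctr (z *t (1%:M:'M[C]_1)) *m (A *t (1%:M:'M[C]_1)) *m (z *t (1%:M : 'M[C]_1))) 0 0
  = (ctr z *m A *m z) 0 0.
Proof.
have -> : ctr (z *t (1%:M:'M[C]_1)) = ctr z *t (1%:M:'M[C]_1).
  by apply/matrixP=> i j; rewrite !mxE !ord1 rmorphM /= conjC1.
rewrite tensmx_mul tensmx_mul !mulmx1 mxE !ord1 -[RHS]mulr1; congr (_ * _).
rewrite mxE; by case: eqP.
Qed.

End H.
Theorem theorem1 (C : numClosedFieldType) (n d : nat)
  (n_ge1 : (0 < n)%N) (d_ge1 : (0 < d)%N)
  (B : 'I_n -> 'I_n -> 'M[C]_d)
  (B_normal : forall i j, B i j \is normalmx)
  (B_comm : forall i j i' j', B i j *m B i' j' = B i' j' *m B i j)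
  (u : 'I_d -> 'cV[C]_d) (u_on : orthonormal_fam u)
  (beta : 'I_n -> 'I_n -> 'I_d -> C)
  (u_eig : forall i j k, B i j *m u k = beta i j k *: u k) :
  let T : 'M[C]_(n * d) := \sum_(i < n) \sum_(j < n) (delta_mx i j *t B i j) in
  let M : 'I_d -> 'M[C]_n := fun k => \matrix_(i, j) beta i j k in
  (separable T <-> psd T) /\
  (psd T <-> forall k, psd (M k)) /\
  (separable T ->
   forall (lambda : 'I_d -> 'I_n -> C) (v : 'I_d -> 'I_n -> 'cV[C]_n),
     (forall k, orthonormal_fam (v k)) ->
     (forall k j, M k *m v k j = lambda k j *: v k j) ->
     T = \sum_(k < d) \sum_(j < n)
           ((lambda k j *: (v k j *m ctr (v k j))) *t (u k *m ctr (u k)))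
     /\ (forall k j, psd (lambda k j *: (v k j *m ctr (v k j)))
                     /\ psd (u k *m ctr (u k)))).
Proof.
move=> T M.
pose P k := u k *m ctr (u k).
have HB i j : B i j = \sum_k beta i j k *: P k.
  rewrite -[B i j]mulmx1 -(sum_outer u_on) mulmx_sumr; apply: eq_bigr => k _.
  by rewrite /P mulmxA u_eig -scalemxAl.
have HT : T = \sum_k M k *t P k.
  rewrite /T; symmetry.
  under eq_bigr => k _ do rewrite [M k]matrix_sum_delta tensmx_suml.
  rewrite exchange_big; apply: eq_bigr => i _.
  under eq_bigr => k _ do rewrite tensmx_suml.
  rewrite exchange_big; apply: eq_bigr => j _.
  rewrite HB tensmx_sumr; apply: eq_bigr => k _.
  by rewrite tensmxZl tensmxZr mxE.
have uPu k l : ctr (u k) *m P l *m u k = ((l == k)%:R)%:M.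
  rewrite /P !mulmxA -(mulmxA _ (ctr (u l))) !u_on -scalar_mxM.
  by rewrite eq_sym -natrM mulnb andbb.
have quadT k (v w : 'cV[C]_n) :
    (ctr (v *t u k) *m T *m (w *t u k)) 0 0 = (ctr v *m M k *m w) 0 0.
  rewrite HT mulmx_sumr mulmx_suml summxE (bigD1 k) //= big1 => [|l lk].
    by rewrite ctr_tens !tensmx_mul uPu tens11E !mxE eqxx mulr1 addr0.
  by rewrite ctr_tens !tensmx_mul uPu tens11E !mxE (negPf lk) mulr0.
have part2 : psd T <-> forall k, psd (M k).
  split.
    move=> [hT qT] k; split.
      apply/matrixP=> i j; rewrite ctrE -(@quad_delta _ _ (M k) j i) -(@quad_delta _ _ (M k) i j) -quadT conj_quad hT.
      by rewrite quadT.
    by move=> v; rewrite -quadT.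
  move=> hM; split.
    rewrite HT ctr_sum; apply: eq_bigr => k _.
    by rewrite ctr_tens (proj1 (hM k)) (proj1 (psd_outer (u k))).
  move=> x; rewrite HT mulmx_sumr mulmx_suml summxE; apply: sumr_ge0 => k _.
  have -> : M k *t P k =
      ((1%:M : 'M[C]_n) *t u k) *m (M k *t (1%:M : 'M[C]_1)) *m (1%:M *t ctr (u k)).
    by rewrite !tensmx_mul mul1mx !mulmx1.
  have [z hz] := col_tens1 _ ((1%:M *t ctr (u k)) *m x).
  have hy : ctr x *m (1%:M *t u k) = ctr (z *t (1%:M : 'M[C]_1)).
    by rewrite -hz ctrM ctr_tens ctrK ctr1.
  rewrite !mulmxA hy -mulmxA hz quad_tens1.
  exact: (proj2 (hM k)).
have part1 : separable T <-> psd T.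
  split; first by case.
  move=> hT; split=> //; exists d, M, P; split=> // k; split.
    by apply part2.
  exact: psd_outer.
split=> //; split=> //.
move=> [hT _] lambda v vo vev.
have hM k : psd (M k) by apply part2.
have HM k : M k = \sum_j lambda k j *: (v k j *m ctr (v k j)).
  rewrite -[M k]mulmx1 -(sum_outer (vo k)) mulmx_sumr; apply: eq_bigr => j _.
  by rewrite mulmxA vev -scalemxAl.
split.
  rewrite HT; apply: eq_bigr => k _; by rewrite HM tensmx_suml.
move=> k j; split; last exact: psd_outer.
apply: psd_scale; last exact: psd_outer.
have := (proj2 (hM k)) (v k j).
rewrite -mulmxA vev -scalemxAr vo mxE !mxE eqxx.
by rewrite mulr1n mulr1.
Qed.
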